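(* Let $X$ be a topological space whose one point compactification $X^*=X\cup\{\infty\}$ is metrizable, and let $T\colon X\to X$ be continuous. Then there exist a compact metrizable space $Z$, a continuous map $S\colon Z\to Z$ and a topological embedding $\iota\colon X\to Z$ with $S\circ\iota=\iota\circ T$ (so that, identifying $X$ with $\iota(X)$ with the induced topology, $T$ is the restriction of $S$). Moreover, the map $\pi\colon Z\to X^*$ given by $\pi(\iota(x))=x$ for $x\in X$ and $\pi(z)=\infty$ for $z\notin\iota(X)$ is continuous. *)

(* Defs.v *)
From HB Require Import structures.
From mathcomp Require Import all_boot all_order all_algebra.
From mathcomp Require Import all_classical all_reals all_analysis.
From mathcomp Require Import Rstruct Rstruct_topology.
From Stdlib Require Import Reals.
Set Implicit Arguments. Unset Strict Implicit. Unset Printing Implicit Defensive.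
Import Order.TTheory GRing.Theory Num.Theory.
Local Open Scope classical_set_scope.
Local Open Scope ring_scope.

Definition is_metric (T : Type) (d : T -> T -> R) : Prop :=
  [/\ forall x y, d x y = 0 <-> x = y,
      forall x y, d x y = d y x &
      forall x y z, d x z <= d x y + d y z].

Definition metrizable (T : topologicalType) : Prop :=
  exists d : T -> T -> R, is_metric d /\
    forall (x : T) (A : set T),
      nbhs x A <-> exists e : R, 0 < e /\ [set y | d x y < e] `<=` A.

(* Topological embedding: injective, continuous, and a homeomorphism onto its
   image with the subspace topology, i.e. every open set of the domain is the
   preimage of an open set of the codomain. *)
Definition topological_embedding (X Z : topologicalType) (i : X -> Z) : Prop :=
  [/\ injective i, continuous i &
      forall U : set X, open U -> exists V : set Z, open V /\ i @^-1` V = U].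

(* Main.v *)
Require Import Defs.
From HB Require Import structures.
From mathcomp Require Import all_boot all_order all_algebra.
From mathcomp Require Import all_classical all_reals all_analysis.
From mathcomp Require Import Rstruct Rstruct_topology.
From mathcomp Require Import lra.
From Stdlib Require Reals.
Set Implicit Arguments. Unset Strict Implicit. Unset Printing Implicit Defensive.
Import Order.TTheory GRing.Theory Num.Theory.
Local Open Scope classical_set_scope.
Local Open Scope ring_scope.
Local Notation R := Rdefinitions.R.

Section metric.
Context (Y : Type) (dY : Y -> Y -> R) (mY : is_metric dY).

Lemma dY_ge0 a b : 0 <= dY a b.
Proof.
case: mY => h0 hs ht; have := ht a b a; rewrite (proj2 (h0 a a) erefl) (hs b a).
lra.
Qed.

Definition eY a b : R := Num.min (dY a b) 1.

Lemma eY_ge0 a b : 0 <= eY a b.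
Proof. rewrite /eY; have := dY_ge0 a b; case: (leP (dY a b) 1) => ?; lra. Qed.

Lemma eY_le1 a b : eY a b <= 1.
Proof. rewrite /eY; case: (leP (dY a b) 1) => ?; lra. Qed.

Lemma eY_le a b : eY a b <= dY a b.
Proof. rewrite /eY; case: (leP (dY a b) 1) => ?; lra. Qed.

Lemma eY_tri a b c : eY a c <= eY a b + eY b c.
Proof.
case: mY => _ _ /(_ a b c); rewrite /eY.
have := dY_ge0 a b; have := dY_ge0 b c; have := dY_ge0 a c.
case: (leP (dY a b) 1) => ?; case: (leP (dY b c) 1) => ?;
  case: (leP (dY a c) 1) => ?; lra.
Qed.

Lemma eY_sym a b : eY a b = eY b a.
Proof. by case: mY => _ hs _; rewrite /eY hs. Qed.

Lemma eY_lt a b d : eY a b < Num.min d 1 -> dY a b < d.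
Proof. rewrite /eY; case: (leP (dY a b) 1) => ?; case: (leP d 1) => ?; lra. Qed.

Definition term (p q : nat -> Y) (n : nat) : R := eY (p n) (q n) / (n.+1)%:R.

Lemma term_ge0 p q n : 0 <= term p q n.
Proof. by rewrite /term divr_ge0 // eY_ge0. Qed.

Lemma term_le p q n : term p q n <= 1 / (n.+1)%:R.
Proof. by rewrite /term ler_pM2r ?invr_gt0 ?ltr0Sn // eY_le1. Qed.

Lemma term_le_e p q n : term p q n <= eY (p n) (q n).
Proof.
rewrite /term ler_pdivrMr ?ltr0Sn // ler_peMr ?eY_ge0 //.
by rewrite ler1n.
Qed.

Definition D (p q : nat -> Y) : R := sup (range (term p q)).

Lemma range_ub p q : has_ubound (range (term p q)).
Proof.
exists 1 => _ [n _ <-]; apply: le_trans (term_le p q n) _.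
rewrite ler_pdivrMr ?ltr0Sn // mul1r ler1n //.
Qed.

Lemma term_le_D p q n : term p q n <= D p q.
Proof. by apply: ub_le_sup; [exact: range_ub | exists n]. Qed.

Lemma D_le p q c : (forall n, term p q n <= c) -> D p q <= c.
Proof. by move=> h; apply: ge_sup; [exists (term p q 0), 0 | move=> _ [n _ <-]]. Qed.

Lemma D_ge0 p q : 0 <= D p q.
Proof. exact: le_trans (term_ge0 p q 0) (term_le_D p q 0). Qed.

Lemma D_sym p q : D p q = D q p.
Proof.
rewrite /D; have -> : term p q = term q p by apply: funext => n; rewrite /term eY_sym.
by [].
Qed.

Lemma D_tri p q r : D p r <= D p q + D q r.
Proof.
apply: D_le => n; apply: le_trans (lerD (term_le_D p q n) (term_le_D q r n)).
rewrite /term -mulrDl ler_pM2r ?invr_gt0 ?ltr0Sn //; exact: eY_tri.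
Qed.

Lemma D_eq0 p q : D p q = 0 -> p = q.
Proof.
move=> h; apply: funext => n.
have t0 : term p q n = 0.
  by apply/eqP; rewrite eq_le term_ge0 -h term_le_D.
have e0 : eY (p n) (q n) = 0.
  by move: t0; rewrite /term => /eqP; rewrite mulf_eq0 invr_eq0 pnatr_eq0 orbF => /eqP.
case: mY => h0 _ _; apply/h0; move: e0; rewrite /eY.
case: (leP (dY (p n) (q n)) 1) => //; lra.
Qed.

Lemma D_refl p : D p p = 0.
Proof.
apply/eqP; rewrite eq_le D_ge0 andbT; apply: D_le => n.
apply: le_trans (term_le_e p p n) _.
case: mY => h0 _ _; rewrite /eY (proj2 (h0 (p n) (p n)) erefl).
case: (leP 0 1) => ?; lra.
Qed.

End metric.

Section topo.
Context (X : topologicalType).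
Local Notation Y := (one_point_compactification X).
Context (dY : Y -> Y -> R) (mY : is_metric dY)
  (hY : forall (x : Y) (A : set Y),
      nbhs x A <-> exists e : R, 0 < e /\ [set y | dY x y < e] `<=` A).

Local Notation P := (prod_topology (fun _ : nat => Y)).

Lemma ptws_cvg (F : set_system P) (FF : Filter F) (s : P) :
  (forall i, (fun f : P => f i) @ F --> s i) -> F --> s.
Proof.
move=> h; apply/cvg_sup => i U [V] [[W] oW <-] WfN WU.
apply: (filterS WU); apply: (h i); exact: open_nbhs_nbhs.
Qed.

Lemma nbhs_ball (p : P) (W : set P) : nbhs p W ->
  exists eps : R, 0 < eps /\ [set q | D dY p q < eps] `<=` W.
Proof.
pose B := filter_from [set e : R | 0 < e] (fun e => [set q | D dY p q < e]).
have FB : Filter B.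
  apply: filter_from_filter; first by exists 1; rewrite /= ltr01.
  move=> a b a0 b0; exists (Num.min a b); first by rewrite /= lt_min a0.
  by move=> q /=; rewrite lt_min => /andP.
suff : B --> p by move=> /(_ W) h /h [e e0 sub]; exists e.
apply: ptws_cvg => i U /hY [d [d0 sub]].
exists (Num.min d 1 / (i.+1)%:R).
  by rewrite /= divr_gt0 ?ltr0Sn // lt_min d0 ltr01.
move=> q /= Dq; apply: sub => /=; apply: (@eY_lt _ dY _ _ d).
have := le_lt_trans (term_le_D dY p q i) Dq.
by rewrite /term ltr_pM2r // invr_gt0 ltr0Sn.
Qed.

Lemma ball_nbhs (p : P) (eps : R) : 0 < eps -> nbhs p [set q | D dY p q < eps].
Proof.
move=> e0.
have Fp : Filter (@nbhs P P p) by exact: nbhs_filter.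
have Hn : forall N : nat, nbhs p [set q : P | forall i : nat, (i < N)%nat -> dY (p i) (q i) < eps / 2].
  elim=> [|N IH]; first by apply: filterS (@filterT _ _ Fp) => q _ i; rewrite ltn0.
  have h1 : nbhs p ((fun f : P => f N) @^-1` [set y | dY (p N) y < eps / 2]).
    apply: (@proj_continuous nat (fun _ => Y) N p).
    by apply/hY; exists (eps / 2); split => //; lra.
  apply: filterS (@filterI _ _ Fp _ _ IH h1) => q [hq hN] i; rewrite ltnS leq_eqVlt.
  by case/orP => [/eqP -> //|]; exact: hq.
set N := Num.Def.archi_bound (2 / eps).
apply: filterS (Hn N) => q hq /=.
have hN : 2 / eps < N%:R by apply: archi_boundP; rewrite divr_ge0 // ltW.
have : D dY p q <= eps / 2; last by lra.
apply: D_le => n; case: (ltnP n N) => nN.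
  apply: le_trans (term_le_e mY p q n) _; apply: le_trans (eY_le dY _ _) _.
  exact/ltW/hq.
apply: le_trans (term_le dY p q n) _.
rewrite ler_pdivrMr ?ltr0Sn //.
have : N%:R <= (n.+1)%:R :> R by rewrite ler_nat; exact: leqW.
move: hN; rewrite ltr_pdivrMr // => hN hn.
have : 2 <= eps * (n.+1)%:R by nra.
lra.
Qed.


Context (T : X -> X) (cT : continuous T).

Definition io (x : X) : P := fun n => Some (iter n T x).
Definition sh (p : P) : P := fun n => p n.+1.

Lemma iter_cont n : continuous (iter n T).
Proof.
elim: n => [|n IH] /=; first by move=> x; exact: cvg_id.
have -> : iter n.+1 T = T \o iter n T by apply: funext.
by move=> x; apply: (continuous_comp (IH x)); exact: cT.
Qed.

Lemma io_cont : continuous io.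
Proof.
move=> x; apply: ptws_cvg => i U hU /=.
have cS : continuous ((Some : X -> Y) \o iter i T).
  move=> y; exact: (@continuous_comp X X Y (iter i T) Some y (@iter_cont i y)
    (@one_point_compactification_some_continuous X (iter i T y))).
have h := cS x U hU; rewrite /= in h; exact: h.
Qed.

Lemma sh_cont : continuous sh.
Proof.
move=> p.
have Fp : Filter (@nbhs P P p) by exact: nbhs_filter.
apply: (@ptws_cvg (sh @ p) (fmap_filter _ Fp) (sh p)) => i U hU.
have h := @proj_continuous nat (fun _ => Y) i.+1 p U hU.
exact: h.
Qed.
End topo.

Section topo2.
Context (X : topologicalType).
Local Notation Y := (one_point_compactification X).
Context (dY : Y -> Y -> R) (mY : is_metric dY)
  (hY : forall (x : Y) (A : set Y),
      nbhs x A <-> exists e : R, 0 < e /\ [set y | dY x y < e] `<=` A).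
Context (T : X -> X) (cT : continuous T).
Local Notation io := (io T).
Local Notation sh := (@sh X).
Local Notation P := (prod_topology (fun _ : nat => Y)).
Lemma sh_io x : sh (io x) = io (T x).
Proof. by apply: funext => n; rewrite /sh /io iterSr. Qed.

Definition A : set P := closure (range io).

Lemma A_io x : A (io x).
Proof. by apply: subset_closure; exists x. Qed.

Lemma A_sh p : A p -> A (sh p).
Proof.
move=> Ap B hB.
have := Ap _ (@sh_cont X p B hB) => -[q [[x _ <-] hq]].
by exists (io (T x)); split; [exists (T x)|rewrite -sh_io].
Qed.

Lemma A_eq p x : A p -> p 0%nat = Some x -> p = io x.
Proof.
move=> Ap p0; apply: funext => n.
have Fp : Filter (@nbhs P P p) by exact: nbhs_filter.
case: (mY) => h0 hs ht.
apply/h0; set g := (Some : X -> Y) \o iter n T.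
have gc : continuous g.
  move=> y; exact: (@continuous_comp X X Y (iter n T) Some y (@iter_cont X T cT n y)
    (@one_point_compactification_some_continuous X (iter n T y))).
set del := dY (p n) (g x).
case: (leP del 0) => hd; first by have := dY_ge0 mY (p n) (g x); rewrite -/del; lra.
have hN : nbhs x (g @^-1` [set y | dY (g x) y < del / 2]).
  apply: gc; apply/hY; exists (del / 2); split => //; lra.
have hB : nbhs p ((fun f : P => f 0%nat) @^-1` (Some @` (g @^-1` [set y | dY (g x) y < del / 2]))
   `&` (fun f : P => f n) @^-1` [set y | dY (p n) y < del / 2]).
  apply: (@filterI _ _ Fp).
    apply: (@proj_continuous nat (fun _ => Y) 0%nat p); rewrite /proj /= p0.
    exact: one_point_compactification_some_nbhs.
  apply: (@proj_continuous nat (fun _ => Y) n p); apply/hY.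
  by exists (del / 2); split => //; lra.
have [q [[x' _ <-] [[x'' hx'' /= ex] hn]]] := Ap _ hB.
move: ex; rewrite /io /= => -[ex]; subst x''.
move: hx'' hn => /= h1 h2.
have e1 : dY (g x') (g x) = dY (g x) (g x') := hs _ _.
have e2 : io x' n = g x' by [].
rewrite e2 in h2.
have := ht (p n) (g x') (g x); rewrite -/del.
lra.
Qed.

Local Notation Z := (set_type A).

Lemma val_cont : continuous (set_val : Z -> P).
Proof. exact: initial_continuous. Qed.

Lemma nbhs_Z (z : Z) (U : set Z) : nbhs z U ->
  exists W : set P, nbhs (set_val z) W /\ set_val @^-1` W `<=` U.
Proof.
case=> O1 [[B oB <-] Bz] sub; exists B; split => //.
exact: open_nbhs_nbhs.
Qed.

Lemma valA (z : Z) : A (set_val z).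
Proof. by case: z => p hp; exact: (set_mem hp). Qed.

Lemma compact_Z : compact [set: Z].
Proof.
have cP : compact [set: P].
  have := @tychonoff nat (fun _ => Y) (fun _ => [set: Y])
    (fun _ => one_point_compactification_compact).
  by congr compact; apply/seteqP; split.
have cA : compact A := subclosed_compact (@closed_closure _ _) cP (@subsetT _ _).
move=> F FF _.
have FG : ProperFilter (set_val @ F) by exact: fmap_proper_filter.
have GA : (set_val @ F) A.
  by apply: (@filterS _ F _ setT) => [z _|]; [exact: valA | exact: filterT].
have [p [Ap clp]] := cA _ FG GA.
exists (exist _ p (mem_set Ap)); split => //.
move=> U V FU /nbhs_Z [W [nW sub]].
have : (set_val @ F) (set_val @` U) by apply: (@filterS _ F _ U) => // u Uu; exists u.
move=> /(clp _ W) /(_ nW) [q [[u Uu <-] Wq]].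
by exists u; split => //; exact: sub.
Qed.

Lemma Z_eq (z w : Z) : set_val z = set_val w -> z = w.
Proof. exact: (eq_sig_hprop (fun x0 p1 p2 => Prop_irrelevance p1 p2) z w). Qed.

Lemma cont_into_Z (S' : topologicalType) (f : S' -> Z) :
  continuous (set_val \o f) -> continuous f.
Proof.
move=> hc s U /nbhs_Z [W [nW sub]].
have Fs : Filter (@nbhs S' S' s) by exact: nbhs_filter.
by apply: (@filterS _ _ Fs _ _ _ (hc s W nW)) => y hy; apply: sub.
Qed.

Lemma metrizable_Z : metrizable Z.
Proof.
exists (fun z w : Z => D dY (set_val z) (set_val w)); split.
  split.
  - move=> z w; split; first by move/(D_eq0 mY)/Z_eq.
    by move=> ->; exact: (D_refl mY).
  - by move=> z w; exact: D_sym.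
  - by move=> z w u; exact: D_tri.
move=> z U; split.
  move=> /nbhs_Z [W [nW sub]].
  have [e [e0 eW]] := nbhs_ball hY nW.
  by exists e; split => // y /= hy; apply: sub; exact: eW.
case=> e [e0 sub].
have Fz : Filter (@nbhs Z Z z) by exact: nbhs_filter.
have h := ball_nbhs mY hY (set_val z) e0.
by apply: (@filterS _ _ Fz _ _ sub); exact: (val_cont h).
Qed.

Definition iotaZ (x : X) : Z := exist _ (io x) (mem_set (@A_io x)).
Definition SZ (z : Z) : Z := exist _ (sh (set_val z)) (mem_set (A_sh (@valA z))).
Definition piZ (z : Z) : Y := set_val z 0%nat.

Lemma SZ_cont : continuous SZ.
Proof.
apply: cont_into_Z => z.
exact: (continuous_comp (@val_cont z) (@sh_cont X (set_val z))).
Qed.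

Lemma SZ_comm : SZ \o iotaZ = iotaZ \o T.
Proof. by apply: funext => x; apply: Z_eq; exact: sh_io. Qed.

Lemma iota_embed : topological_embedding iotaZ.
Proof.
split.
- by move=> x y /(congr1 (fun z : Z => set_val z 0%nat)) [].
- by apply: cont_into_Z; exact: (io_cont cT).
- move=> U oU.
  exists (set_val @^-1` ((fun f : P => f 0%nat) @^-1` (Some @` U))); split.
    exists ((fun f : P => f 0%nat) @^-1` (Some @` U)) => //.
    have hc : continuous (fun f : P => f 0%nat) := @proj_continuous nat (fun _ => Y) 0%nat.
    exact: (proj1 (continuousP _) hc _ (@one_point_compactification_open_some X U oU)).
  apply/seteqP; split => x /=.
    by case=> x' Ux' [<-].
  by move=> Ux; exists x.
Qed.

Lemma piZ_cont : continuous piZ.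
Proof.
move=> z; exact: (continuous_comp (@val_cont z)
  (@proj_continuous nat (fun _ => Y) 0%nat (set_val z))).
Qed.

Lemma piZ_none (z : Z) : ~ (exists x, iotaZ x = z) -> piZ z = None.
Proof.
move=> hz; rewrite /piZ; case e : (set_val z 0%nat) => [x|] //.
exfalso; apply: hz; exists x; apply: Z_eq => /=.
by rewrite (A_eq (@valA z) e).
Qed.
End topo2.

Theorem lemma2p3 (X : topologicalType) (T : X -> X) :
  metrizable (one_point_compactification X) ->
  continuous T ->
  exists (Z : topologicalType) (S : Z -> Z) (iota : X -> Z)
         (pi : Z -> one_point_compactification X),
    [/\ compact [set: Z], metrizable Z, continuous S,
        topological_embedding iota &
        S \o iota = iota \o T] /\
    [/\ (forall x : X, pi (iota x) = Some x),
        (forall z : Z, ~ (exists x : X, iota x = z) -> pi z = None) &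
        continuous pi].
Proof.
move=> [dY [mY hY]] cT.
exists (set_type (A T)), (@SZ _ T), (@iotaZ _ T), (@piZ _ T).
split; split.
- exact: compact_Z.
- exact: (@metrizable_Z _ _ mY hY T).
- exact: SZ_cont.
- exact: (iota_embed cT).
- exact: SZ_comm.
- by [].
- exact: (piZ_none mY hY cT).
- exact: piZ_cont.
Qed.
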